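(* Let $(V,C,\sigma)$ be any election with $|V|=n$. For each candidate $a\in C$, the integral domination graph $G(a)$ admits a perfect matching if and only if the $(p^{\mathrm{uni}},q^{\mathrm{plu}})$-domination graph $G_{p^{\mathrm{uni}},q^{\mathrm{plu}}}(a)$ admits a fractional perfect matching. Consequently, there exists a candidate $a\in C$ whose integral domination graph admits a perfect matching, i.e.\ for which there is a bijection $M:V\to V$ with $a\succeq_i \mathrm{top}(M(i))$ for every $i\in V$.
   Context: An election consists of voters $V$ ($|V|=n\ge1$), a finite nonempty candidate set $C$, and a profile of linear orders $\sigma_i$ over $C$; $a\succeq_i c$ means $a=c$ or $i$ ranks $a$ above $c$; $\mathrm{top}(i)$ is $i$'s first choice; $\mathrm{plu}(c)=|\{i:\mathrm{top}(i)=c\}|$. Weights: $p^{\mathrm{uni}}(i)=1/n$ for all $i\in V$, and $q^{\mathrm{plu}}(c)=\mathrm{plu}(c)/n$ for all $c\in C$. For weight vectors $p$ on $V$ and $q$ on $C$ (nonnegative, summing to $1$), the $(p,q)$-domination graph $G_{p,q}(a)$ is the vertex-weighted bipartite graph with left vertices $V$ (weights $p(i)$), right vertices $C$ (weights $q(c)$), and edge $(i,c)$ iff $a\succeq_i c$; a fractional perfect matching is a nonnegative edge weighting whose total at each vertex equals that vertex's weight. The integral domination graph $G(a)$ is the bipartite graph with both sides copies of $V$ and edge $(i,j)$ iff $a\succeq_i\mathrm{top}(j)$. *)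

(* Defs.v *)
From mathcomp Require Import all_boot all_order all_algebra all_fingroup.
Set Implicit Arguments. Unset Strict Implicit. Unset Printing Implicit Defensive.
Import Order.TTheory GRing.Theory Num.Theory.
Local Open Scope ring_scope.

(* A profile: for each voter i, a strict preference relation [pref i]
   ([pref i a c] means i ranks a strictly above c). *)
Definition is_linear_order (C : finType) (r : rel C) : Prop :=
  [/\ irreflexive r, transitive r & forall x y, x != y -> r x y || r y x].

Definition wpref (V C : finType) (pref : V -> rel C) (i : V) (a c : C) : bool :=
  (a == c) || pref i a c.

Definition is_top (V C : finType) (pref : V -> rel C) (top : V -> C) : Prop :=
  forall i c, wpref pref i (top i) c.

Definition plu (V C : finType) (top : V -> C) (c : C) : nat :=
  #|[set i | top i == c]|.

Definition p_uni (R : realFieldType) (V : finType) (i : V) : R := (#|V|%:R)^-1.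
Definition q_plu (R : realFieldType) (V C : finType) (top : V -> C) (c : C) : R :=
  (plu top c)%:R / #|V|%:R.

(* Fractional perfect matching in the (p,q)-domination graph G_{p,q}(a):
   nonnegative edge weights, supported on edges (i,c) with a >=_i c,
   whose total at each vertex equals its weight. *)
Definition has_frac_pm (R : realFieldType) (V C : finType) (pref : V -> rel C)
  (p : V -> R) (q : C -> R) (a : C) : Prop :=
  exists w : V -> C -> R,
    [/\ forall i c, 0 <= w i c,
        forall i c, ~~ wpref pref i a c -> w i c = 0,
        forall i, \sum_(c : C) w i c = p i
      & forall c, \sum_(i : V) w i c = q c].

(* Perfect matching in the integral domination graph G(a): both sides are
   copies of V, edge (i,j) iff a >=_i top j; a perfect matching is a
   bijection M : V -> V along edges. *)
Definition has_int_pm (V C : finType) (pref : V -> rel C) (top : V -> C) (a : C) : Prop :=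
  exists M : {perm V}, forall i, wpref pref i a (top (M i)).

(* Main.v *)
Require Import Defs.
From mathcomp Require Import all_boot all_order all_algebra all_fingroup.
From mathcomp Require Import zify.
From Stdlib Require Import Lia.
Set Implicit Arguments. Unset Strict Implicit. Unset Printing Implicit Defensive.
Import Order.TTheory GRing.Theory Num.Theory.
Definition nbh (T T' : finType) (r : T -> T' -> bool) (S : {set T}) : {set T'} :=
  [set y | [exists x in S, r x y]].

Lemma nbhP (T T' : finType) (r : T -> T' -> bool) (S : {set T}) y :
  reflect (exists2 x, x \in S & r x y) (y \in nbh r S).
Proof.
rewrite inE; apply: (iffP existsP) => [[x /andP[? ?]]|[x ? ?]]; first by exists x.
by exists x; apply/andP.
Qed.

Lemma hall (T T' : finType) (y0 : T') (r : T -> T' -> bool) (A : {set T}) :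
  (forall S : {set T}, S \subset A -> #|S| <= #|nbh r S|) ->
  exists f : T -> T', {in A &, injective f} /\ forall x, x \in A -> r x (f x).
Proof.
have [k] : exists k, #|A| <= k by exists #|A|.
elim: k r A => [|k IH] r A.
  rewrite leqn0 cards_eq0 => /eqP -> _.
  by exists (fun _ => y0); split => [x|x]; rewrite inE.
move=> hA hall.
case: (boolP [exists S : {set T}, [&& S \subset A, S != set0, S != A &
          #|nbh r S| <= #|S|]]).
- case/existsP => S0 /and4P [sS0 nS0 nAS0 tight].
  have lt0 : #|S0| < #|A| by apply: proper_card; rewrite properEneq nAS0.
  have [f1 [f1i f1r]] : exists f : T -> T', {in S0 &, injective f} /\ forall x, x \in S0 -> r x (f x).
    apply: IH; first by rewrite -ltnS (leq_trans lt0).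
    by move=> S sS; apply: hall (subset_trans sS sS0).
  pose r2 x y := r x y && (y \notin nbh r S0).
  have [f2 [f2i f2r]] : exists f : T -> T', {in A :\: S0 &, injective f} /\ forall x, x \in A :\: S0 -> r2 x (f x).
    apply: IH.
      rewrite cardsD (setIidPr sS0).
      have : 0 < #|S0| by rewrite card_gt0.
      lia.
    move=> S sS.
    have dS : [disjoint S & S0].
      rewrite -setI_eq0; apply/eqP/setP => x; rewrite !inE.
      apply/negbTE/negP => /andP[xS xS0].
      by move: (subsetP sS x xS); rewrite !inE xS0.
    have sSA : S :|: S0 \subset A.
      rewrite subUset sS0 andbT; apply: subset_trans sS _; exact: subsetDl.
    have h1 := hall _ sSA.
    rewrite cardsU (disjoint_setI0 dS) cards0 subn0 in h1.
    have h2 : nbh r (S :|: S0) \subset nbh r S :|: nbh r S0.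
      apply/subsetP => y /nbhP [x]; rewrite in_setU => /orP[] xS rxy;
        rewrite in_setU; apply/orP; [left|right]; apply/nbhP; eauto.
    have h3 : nbh r S :\: nbh r S0 \subset nbh r2 S.
      apply/subsetP => y; rewrite in_setD => /andP[yn /nbhP [x xS rxy]].
      by apply/nbhP; exists x => //; rewrite /r2 rxy.
    have h4 := subset_leq_card h2.
    have h5 := subset_leq_card h3.
    move: h4; rewrite cardsU => h4.
    move: h5; rewrite cardsD => h5.
    have h6 : #|nbh r S :&: nbh r S0| <= #|nbh r S0| by apply: subset_leq_card; apply: subsetIr.
    lia.
  exists (fun x => if x \in S0 then f1 x else f2 x); split.
    move=> x x' xA x'A /=.
    case: ifP => xS0; case: ifP => x'S0.
    + exact: f1i.
    + move=> e; have := f2r x'; rewrite in_setD x'S0 x'A => /(_ isT) /andP[_].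
      by rewrite -e; case/negP; apply/nbhP; exists x => //; apply: f1r.
    + move=> e; have := f2r x; rewrite in_setD xS0 xA => /(_ isT) /andP[_].
      by rewrite e; case/negP; apply/nbhP; exists x' => //; apply: f1r.
    + by apply: f2i; rewrite in_setD ?xS0 ?x'S0 ?xA ?x'A.
  move=> x xA; case: ifP => xS0; first exact: f1r.
  by have := f2r x; rewrite in_setD xS0 xA => /(_ isT) /andP[].
- move/existsPn => loose.
  have {}loose (S : {set T}) : S \subset A -> S != set0 -> S != A -> #|S| < #|nbh r S|.
    move=> sS nS nA; have := loose S; rewrite sS nS nA /= leqNgt; by case: ltnP.
  case: (set_0Vmem A) => [->|[x xA]].
    by exists (fun _ => y0); split => [z|z]; rewrite inE.
  have : 0 < #|nbh r [set x]|.
    by apply: leq_trans (hall _ _); rewrite ?cards1 // sub1set.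
  rewrite card_gt0 => /set0Pn [y /nbhP [x' ]]; rewrite inE => /eqP -> rxy.
  pose r' x' y' := r x' y' && (y' != y).
  have [f' [f'i f'r]] : exists f : T -> T', {in A :\ x &, injective f} /\ forall z, z \in A :\ x -> r' z (f z).
    apply: IH.
      move: hA; rewrite (cardsD1 x A) xA; lia.
    move=> S sS.
    case: (eqVneq S set0) => [->|nS]; first by rewrite cards0.
    have sSA : S \subset A by apply: subset_trans sS (subsetDl _ _).
    have nA : S != A.
      apply/eqP => eSA; move: (subsetP sS x); rewrite eSA xA !inE eqxx /=.
      by move/(_ isT).
    have h1 := loose S sSA nS nA.
    have h3 : nbh r S :\ y \subset nbh r' S.
      apply/subsetP => z; rewrite in_setD1 => /andP[zy /nbhP [w wS rwz]].
      by apply/nbhP; exists w => //; rewrite /r' rwz.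
    have h5 := subset_leq_card h3.
    have h6 := cardsD1 y (nbh r S).
    case: (y \in nbh r S) h6 => /= h6; lia.
  exists (fun z => if z == x then y else f' z); split.
    move=> z z' zA z'A /=.
    case: eqP => zx; case: eqP => z'x.
    + by rewrite zx z'x.
    + move=> e; have := f'r z'; rewrite in_setD1 z'A andbT => /(_ (introN eqP z'x)) /andP[_].
      by rewrite -e eqxx.
    + move=> e; have := f'r z; rewrite in_setD1 zA andbT => /(_ (introN eqP zx)) /andP[_].
      by rewrite e eqxx.
    + by apply: f'i; rewrite in_setD1 ?zA ?z'A andbT; apply/eqP.
  move=> z zA; case: eqP => [->//|zx].
  by have := f'r z; rewrite in_setD1 zA andbT => /(_ (introN eqP zx)) /andP[].
Qed.

Section Veto.
Variables (V C : finType) (pref : V -> rel C) (top : V -> C).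
Hypothesis hlin : forall i, is_linear_order (pref i).

Lemma least_pref i (S : {set C}) c0 : c0 \in S ->
  exists2 c, c \in S & forall d, d \in S -> wpref pref i d c.
Proof.
move=> c0S.
case: (arg_maxnP (fun c => #|[set d | pref i d c]|) c0S) => c cS cmax.
exists c => // d dS; rewrite /wpref.
case: (eqVneq d c) => //= ndc.
have [irr tr tot] := hlin i.
case/orP: (tot _ _ ndc) => // pcd.
have : #|[set e | pref i e c]| < #|[set e | pref i e d]|.
  apply: proper_card; apply/properP; split.
    by apply/subsetP => e; rewrite !inE => h; apply: tr pcd.
  by exists c; rewrite !inE ?pcd ?irr.
move=> h; have := cmax d dS; simpl; lia.
Qed.

Lemma veto (l l2 : seq V) : uniq l -> size l = size l2 -> 0 < size l ->
  exists a, exists g : V -> V, [/\ a \in map top l2,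
    (forall z, z \in l -> wpref pref z a (top (g z))) & perm_eq (map g l) l2].
Proof.
elim: l l2 => [//|i l' IH] l2 /= /andP[il' ul'] sz _.
have [j0 j0l2] : exists j0, j0 \in l2.
  by case: l2 sz => // j0 l2 _; exists j0; rewrite inE eqxx.
have j0S : top j0 \in [set c | c \in map top l2] by rewrite inE; apply: map_f.
have [c cS cmin] := least_pref i j0S.
move: (cS); rewrite inE => /mapP [j jl2 ecj].
have szr : size (rem j l2) = size l' by rewrite size_rem // -sz.
have [a [g' [al2 ha hp hai]]] : exists a, exists g' : V -> V, [/\ a \in map top l2,
    (forall z, z \in l' -> wpref pref z a (top (g' z))),
    perm_eq (map g' l') (rem j l2) & wpref pref i a c].
  case: l' IH il' ul' sz szr => [|i' l''] IH il' ul' sz szr.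
    exists c, (fun _ => j); split => //; first by move: cS; rewrite inE.
      by move/size0nil: szr => ->.
    by rewrite /wpref eqxx.
  have [a [g' [al2 ha hp]]] := IH (rem j l2) ul' (esym szr) isT.
  have al2' : a \in map top l2.
    by case/mapP: al2 => x /mem_rem xl ->; apply: map_f.
  exists a, g'; split => //.
  by apply: cmin; rewrite inE.
exists a, (fun z => if z == i then j else g' z); split => //.
  move=> z; rewrite inE; case: eqP => [-> _|nzi /= zl]; first by rewrite -ecj.
  exact: ha.
rewrite eqxx /=.
have -> : map (fun z => if z == i then j else g' z) l' = map g' l'.
  apply/eq_in_map => z zl; case: eqP => // ezi; by move: il'; rewrite -ezi zl.
apply: (perm_trans (y := j :: rem j l2)); first by rewrite perm_cons.
by rewrite perm_sym; apply: perm_to_rem.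
Qed.

End Veto.

Lemma sum_plu (V C : finType) (top : V -> C) (P : pred C) :
  (\sum_(c | P c) plu top c)%N = #|[set j | P (top j)]|.
Proof.
rewrite -sum1dep_card (partition_big top P) //=.
apply: eq_bigr => c Pc; rewrite /plu -sum1dep_card.
by apply: eq_bigl => j; rewrite andb_idl // => /eqP ->.
Qed.

Unset Implicit Arguments.
Local Open Scope ring_scope.

Theorem corollary1 (R : realFieldType) (V C : finType)
  (pref : V -> rel C) (top : V -> C)
  (hV : (0 < #|V|)%N) (hC : (0 < #|C|)%N)
  (hlin : forall i, is_linear_order (pref i))
  (htop : is_top pref top) :
  (forall a : C, has_int_pm pref top a <->
     has_frac_pm pref (@p_uni R V) (q_plu R top) a)
  /\ (exists a : C, has_int_pm pref top a).
Proof.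
have n0 : (#|V|%:R : R) != 0 by rewrite pnatr_eq0 -lt0n.
have ninv : 0 < (#|V|%:R : R)^-1 by rewrite invr_gt0 ltr0n.
split.
  move=> a; split.
    case=> M hM.
    exists (fun i c => if c == top (M i) then (#|V|%:R)^-1 else 0); split.
    - by move=> i c; case: eqP => // _; apply: ltW.
    - move=> i c; case: eqP => // ->; by rewrite hM.
    - move=> i; rewrite -big_mkcond /= big_pred1_eq //.
    - move=> c; rewrite -big_mkcond /= /q_plu.
      rewrite (reindex_inj (@perm_inj _ M^-1)) /=.
      under eq_bigl => i do rewrite permKV.
      rewrite sumr_const /plu cardsE [RHS]mulrC mulr_natr.
      congr (_ *+ _); apply: eq_card => i.
      by rewrite !unfold_in; exact: eq_sym.
  case=> w [w0 wz wr wc].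
  pose r i j := wpref pref i a (top j).
  have [i0 _] : exists i0 : V, true by case/card_gt0P: hV => x _; exists x.
  have hall' : forall S : {set V}, S \subset setT -> (#|S| <= #|nbh r S|)%N.
    move=> S _.
    pose NC := [set c | [exists i in S, wpref pref i a c]].
    have eN : nbh r S = [set j | top j \in NC].
      apply/setP => j; rewrite !inE; by [].
    rewrite eN -sum_plu -(ler_nat R) -(ler_pM2r ninv).
    apply: (le_trans (y := \sum_(i in S) \sum_(c in NC) w i c)).
      rewrite mulr_natl -sumr_const.
      rewrite le_eqVlt; apply/orP; left; apply/eqP; apply: eq_bigr => i iS.
      rewrite /p_uni in wr; rewrite -(wr i) (bigID (fun c => c \in NC)) /= [X in _ + X]big1 ?addr0 //.
      move=> c cN; apply: wz; apply: contra cN => h; rewrite inE.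
      by apply/existsP; exists i; rewrite iS.
    rewrite exchange_big /= natr_sum mulr_suml.
    apply: ler_sum => c _.
    rewrite /q_plu in wc; rewrite -wc.
    rewrite [X in _ <= X](bigID (fun i => i \in S)) /= lerDl.
    by apply: sumr_ge0 => i _; apply: w0.
  have [f [fi fr]] := @hall V V i0 r setT hall'.
  have finj : injective f by move=> x y; apply: fi; rewrite inE.
  exists (perm finj) => i; rewrite permE; apply: fr; by rewrite inE.
have [i0 _] : exists i0 : V, true by case/card_gt0P: hV => x _; exists x.
have := @veto V C pref top hlin (enum V) (enum V) (enum_uniq _) erefl.
rewrite -cardE => /(_ hV) [a [g [_ hg hp]]].
have ginj : injective g.
  apply/injectiveP; rewrite /injectiveb /dinjectiveb.
  by rewrite (perm_uniq hp) enum_uniq.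
exists a, (perm ginj) => i; rewrite permE; apply: hg; by rewrite mem_enum.
Qed.
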